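(* Let $A\in\mathbb{R}^{d\times n}$ (with $n>d$) have nonzero columns $a_1,\dots,a_n$. Let $x_0\in\mathbb{R}^n$ have support $S_0$ with $|S_0|=m_0$, and let $y_0=Ax_0$. Suppose that the Exact Recovery Condition fails for $S_0$. Suppose further that there is $x_1\in\mathbb{R}^n$ whose support $S_1$ satisfies $S_1\supseteq S_0$, $|S_1|=m_1>m_0$, and that the Exact Recovery Condition holds for $S_1$. Then Orthogonal Matching Pursuit applied to $y_0$ recovers $x_0$ within $m_1$ steps: after at most $m_1$ iterations the residual is zero and the coefficient vector produced by OMP (with entries outside the selected index set set to zero) equals $x_0$.
   Context: For $S\subset\{1,\dots,n\}$, let $A_S$ be the matrix of columns $a_i$, $i\in S$. The Exact Recovery Condition (ERC) holds for $S$ if $A_S$ has full column rank and $\max_{j\notin S}\|A_S^{+}a_j\|_1<1$, where $A_S^{+}$ is the Moore–Penrose pseudoinverse; it fails otherwise. Orthogonal Matching Pursuit (OMP) on a signal $y$: set $r_0=y$, $\Lambda_0=\emptyset$; at iteration $k\ge1$, if $r_{k-1}=0$ stop; otherwise choose $j_k\in\arg\max_j|a_j^Tr_{k-1}|$, set $\Lambda_k=\Lambda_{k-1}\cup\{j_k\}$, let $x^{(k)}$ be the least-squares coefficients minimizing $\|y-A_{\Lambda_k}z\|_2$ over $z$ (supported on $\Lambda_k$, zero elsewhere), and set $r_k=y-Ax^{(k)}$. *)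

(* Defs.v *)
From HB Require Import structures.
From mathcomp Require Import all_boot all_order all_algebra.
From mathcomp Require Import reals.
Set Implicit Arguments. Unset Strict Implicit. Unset Printing Implicit Defensive.
Import Order.TTheory GRing.Theory Num.Theory.
Local Open Scope ring_scope.

Section Defs.
Variables (R : realType) (d n : nat).
Implicit Types (A : 'M[R]_(d, n)) (S : {set 'I_n}).

Definition supp (x : 'cV[R]_n) : {set 'I_n} := [set i | x i 0 != 0].

Definition subcols A S : 'M[R]_(d, #|S|) :=
  \matrix_(i < d, k < #|S|) A i (enum_val k).

Definition is_pinv (p q : nat) (M : 'M[R]_(p, q)) (P : 'M[R]_(q, p)) : Prop :=
  [/\ M *m P *m M = M, P *m M *m P = P,
      (M *m P)^T = M *m P & (P *m M)^T = P *m M].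

Definition l1norm (q : nat) (v : 'cV[R]_q) : R := \sum_i `|v i 0|.
Definition l2norm (q : nat) (v : 'cV[R]_q) : R := Num.sqrt (\sum_i v i 0 ^+ 2).

Definition ERC A S : Prop :=
  \rank (subcols A S) = #|S| /\
  forall P : 'M[R]_(#|S|, d), is_pinv (subcols A S) P ->
    forall j : 'I_n, j \notin S -> l1norm (P *m col j A) < 1.

Definition corr A (j : 'I_n) (r : 'cV[R]_d) : R := `|((col j A)^T *m r) 0 0|.

Definition is_LS A (y : 'cV[R]_d) (L : {set 'I_n}) (x : 'cV[R]_n) : Prop :=
  supp x \subset L /\
  forall z : 'cV[R]_n, supp z \subset L -> l2norm (y - A *m x) <= l2norm (y - A *m z).

(* (lam k, xs k) = (Lambda_k, x^(k)) is a run of OMP on y (any tie-breaking and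
   any choice of least-squares minimizer); residual r_k = y - A x^(k).
   Once r_k = 0 the algorithm has stopped and later values are irrelevant. *)
Definition OMP_run A (y : 'cV[R]_d) (lam : nat -> {set 'I_n}) (xs : nat -> 'cV[R]_n)
  : Prop :=
  lam 0%N = set0 /\ xs 0%N = 0 /\
  forall k : nat, y - A *m xs k != 0 ->
    exists j : 'I_n,
      (forall j' : 'I_n, corr A j' (y - A *m xs k) <= corr A j (y - A *m xs k)) /\
      lam k.+1 = j |: lam k /\ is_LS A y (lam k.+1) (xs k.+1).

End Defs.

(* Main.v *)
Require Import Defs.
From HB Require Import structures.
From mathcomp Require Import all_boot all_order all_algebra.
From mathcomp Require Import reals.
From mathcomp Require Import ring lra.
Import Order.TTheory GRing.Theory Num.Theory.
Local Open Scope ring_scope.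

Set Implicit Arguments. Unset Strict Implicit.
Section Helpers.
Variable R : realType.

Lemma sqv (p : nat) (v : 'cV[R]_p) : (v^T *m v) 0 0 = \sum_i v i 0 ^+ 2.
Proof. by rewrite !mxE; apply: eq_bigr => i _; rewrite mxE expr2. Qed.

Lemma sq0 (p : nat) (v : 'cV[R]_p) : (v^T *m v) 0 0 = 0 -> v = 0.
Proof.
rewrite sqv => H; apply/matrixP => i j; rewrite (ord1 j) [RHS]mxE.
have := @psumr_eq0P _ _ _ (fun i => v i 0 ^+ 2) (fun i _ => sqr_ge0 (v i 0)) H i isT.
by move/eqP; rewrite sqrf_eq0 => /eqP.
Qed.

Lemma pinv_ex (p q : nat) (M : 'M[R]_(p, q)) : \rank M = q ->
  exists P, is_pinv M P.
Proof.
move=> rk.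
set B := M^T *m M.
have rfT : row_free M^T by rewrite /row_free mxrank_tr rk.
have uB : B \in unitmx.
  rewrite unitmxE unitfE; apply/negP => /det0P [v vn0 Hv].
  set u := v *m M^T.
  have Hu : (u^T^T *m u^T) 0 0 = 0.
    by rewrite trmxK /u trmx_mul trmxK mulmxA -(mulmxA v) -/B Hv mul0mx mxE.
  have u0 := sq0 Hu.
  have : v *m M^T = 0 *m M^T.
    by rewrite mul0mx -/u -(trmxK u) u0 trmx0.
  by move/(row_free_inj rfT) => v0; rewrite v0 eqxx in vn0.
exists (invmx B *m M^T).
have PM : invmx B *m M^T *m M = 1%:M by rewrite -mulmxA -/B mulVmx.
split.
- by rewrite -mulmxA PM mulmx1.
- by rewrite PM mul1mx.
- rewrite !trmx_mul trmxK trmx_inv /B trmx_mul trmxK.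
  by rewrite -/B mulmxA.
- by rewrite PM trmx1.
Qed.

Variables (d n : nat).

Lemma corr_mx (A : 'M[R]_(d, n)) j (r : 'cV[R]_d) :
  ((col j A)^T *m r) 0 0 = (A^T *m r) j 0.
Proof. by rewrite !mxE; apply: eq_bigr => k _; rewrite !mxE. Qed.

Lemma Az_Mc (A : 'M[R]_(d, n)) (S : {set 'I_n}) (z : 'cV[R]_n) :
  supp z \subset S ->
  A *m z = subcols A S *m (\col_(k < #|S|) z (enum_val k) 0).
Proof.
move=> /subsetP Hz; apply/matrixP => i k; rewrite (ord1 k) !mxE.
rewrite (bigID (fun l => l \in S)) /= [X in _ + X]big1 ?addr0; last first.
  move=> l lS; case: (eqVneq (z l 0) 0) => [->|nz]; first by rewrite mulr0.
  by move: (Hz l); rewrite /supp inE nz (negbTE lS) => /(_ isT).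
rewrite big_enum_val /=.
by apply: eq_bigr => l _; rewrite !mxE.
Qed.

Lemma uniq_sol (A : 'M[R]_(d, n)) (S : {set 'I_n}) (z : 'cV[R]_n) :
  \rank (subcols A S) = #|S| -> supp z \subset S -> A *m z = 0 -> z = 0.
Proof.
move=> rk Hs Az; move: (Az); rewrite (Az_Mc A Hs).
set c := \col_k _ => Mc.
have rfT : row_free (subcols A S)^T by rewrite /row_free mxrank_tr rk.
have : c^T *m (subcols A S)^T = 0 *m (subcols A S)^T.
  by rewrite -trmx_mul Mc trmx0 mul0mx.
move/(row_free_inj rfT) => cT0.
have c0 : c = 0 by rewrite -(trmxK c) cT0 trmx0.
apply/matrixP => i j; rewrite (ord1 j) [RHS]mxE.
case: (boolP (i \in S)) => iS.
  pose k : 'I_#|S| := enum_rank_in iS i.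
  have ek : enum_val k = i by exact: (enum_rankK_in iS iS).
  have := congr1 (fun m : 'cV[R]_#|S| => m k 0) c0.
  by rewrite /c !mxE ek.
move/subsetP: Hs => Hs; case: (eqVneq (z i 0) 0) => // nz.
by have := Hs i; rewrite /supp inE nz => /(_ isT) iS'; rewrite iS' in iS.
Qed.

Lemma normal_eq (A : 'M[R]_(d, n)) y L x : is_LS A y L x ->
  forall i, i \in L -> (col i A)^T *m (y - A *m x) = 0.
Proof.
move=> [Hs Hmin] i iL.
set r := y - A *m x; set a := col i A.
set g := \sum_l a l 0 * r l 0; set N := \sum_l a l 0 ^+ 2.
have key : forall t : R, 0 <= - (2 * t * g) + t ^+ 2 * N.
  move=> t.
  have Hsupp : supp (x + t *: delta_mx i 0) \subset L.
    apply/subsetP => k; rewrite /supp inE !mxE.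
    case: (eqVneq i k) => [<- //|ik].
    rewrite /= mulr0 addr0 => nz.
    by move/subsetP: Hs => /(_ k); rewrite /supp inE nz => /(_ isT).
  have := Hmin _ Hsupp.
  rewrite /l2norm ler_sqrt; last by apply: sumr_ge0 => l _; apply: sqr_ge0.
  have -> : y - A *m (x + t *: delta_mx i 0) = r - t *: a.
    by rewrite mulmxDr -scalemxAr -colE /r opprD addrA.
  have -> : \sum_l (r - t *: a) l 0 ^+ 2 =
            \sum_l (r l 0 ^+ 2 + (- (2 * t * (a l 0 * r l 0)) + t ^+ 2 * a l 0 ^+ 2)).
    by apply: eq_bigr => l _; rewrite !mxE; ring.
  rewrite big_split /= -[X in X <= _]addr0 lerD2l.
  by rewrite big_split /= -mulr_sumr sumrN -mulr_sumr.
have N0 : 0 <= N by apply: sumr_ge0 => l _; apply: sqr_ge0.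
have g0 : g = 0.
  have Ht : g / (N + 1) * (N + 1) = g by rewrite mulfVK //; lra.
  have := key (g / (N + 1)).
  move: (g / (N + 1)) Ht => t Ht H.
  have t0 : t = 0 by move: H; rewrite -Ht => H; nra.
  by rewrite -Ht t0 mul0r.
apply/matrixP => u v; rewrite (ord1 u) (ord1 v) [RHS]mxE -g0 !mxE.
by apply: eq_bigr => l _; rewrite !mxE.
Qed.

Lemma key (A : 'M[R]_(d, n)) (S : {set 'I_n}) (z : 'cV[R]_n) j :
  ERC A S -> supp z \subset S -> A *m z != 0 ->
  (forall j', corr A j' (A *m z) <= corr A j (A *m z)) ->
  j \in S /\ 0 < corr A j (A *m z).
Proof.
move=> [rk Herc] Hs nz Hmax.
set r := A *m z.
have pos : 0 < corr A j r.
  rewrite lt_neqAle normr_ge0 andbT; apply/negP => /eqP H0.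
  have AT0 : A^T *m r = 0.
    apply/matrixP => u v; rewrite (ord1 v) [RHS]mxE -corr_mx.
    apply/eqP; rewrite -normr_eq0 eq_le normr_ge0 andbT.
    by have := Hmax u; rewrite -H0.
  have : (r^T *m r) 0 0 = 0.
    by rewrite {1}/r trmx_mul -mulmxA AT0 mulmx0 mxE.
  by move/sq0 => r0; rewrite -/r r0 eqxx in nz.
split=> //.
apply/negPn/negP => jS.
have [P HP] := pinv_ex rk.
have hw := Herc P HP j jS.
set M := subcols A S in HP hw.
set w := P *m col j A in hw.
set c := \col_(k < #|S|) z (enum_val k) 0.
have Hr : r = M *m c by rewrite /r (Az_Mc A Hs).
set g := M^T *m r.
have Hid : (col j A)^T *m r = w^T *m g.
  case: HP => H1 H2 H3 H4.
  rewrite /w /g trmx_mul !mulmxA -(mulmxA _ P^T) -trmx_mul H3.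
  by rewrite -!mulmxA (Az_Mc A Hs) -/M -/c [X in _ = _ *m X]mulmxA (mulmxA (M *m P) M c) H1.
have : corr A j r <= l1norm w * corr A j r.
  rewrite {1}/corr Hid mxE.
  apply: le_trans (ler_norm_sum _ _ _) _.
  rewrite /l1norm mulr_suml; apply: ler_sum => k _.
  rewrite mxE normrM ler_wpM2l //.
  have := Hmax (enum_val k); rewrite {2}/corr.
  suff -> : g k 0 = ((col (enum_val k) A)^T *m r) 0 0 by [].
  rewrite corr_mx /g !mxE; apply: eq_bigr => l _; rewrite !mxE //.
move: hw pos; set L := l1norm w; set C := corr A j r => hw pos H.
have h2 : L * C < C by rewrite -[X in _ < X]mul1r ltr_pM2r.
by move: (le_lt_trans H h2); rewrite ltxx.
Qed.

End Helpers.
Unset Implicit Arguments. Set Strict Implicit.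

Theorem theorem10 (R : realType) (d n : nat) (A : 'M[R]_(d, n))
  (x0 x1 : 'cV[R]_n) :
  (d < n)%N ->
  (forall j : 'I_n, col j A != 0) ->
  ~ ERC A (supp x0) ->
  supp x0 \subset supp x1 ->
  (#|supp x0| < #|supp x1|)%N ->
  ERC A (supp x1) ->
  forall (lam : nat -> {set 'I_n}) (xs : nat -> 'cV[R]_n),
    OMP_run A (A *m x0) lam xs ->
    exists k : nat,
      [/\ (k <= #|supp x1|)%N,
          A *m x0 - A *m xs k = 0,
          (forall i : nat, (i < k)%N -> A *m x0 - A *m xs i != 0)
        & xs k = x0].
Proof.
move=> _ _ _ H01 _ Herc lam xs [L0 [X0 Hstep]].
set S1 := supp x1.
pose r k := A *m x0 - A *m xs k.
have inv : forall k, (forall i, (i < k)%N -> r i != 0) ->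
   [/\ lam k \subset S1, #|lam k| = k, supp (xs k) \subset lam k &
       forall i, i \in lam k -> (col i A)^T *m r k = 0].
  elim=> [_|k IH Hk].
    rewrite L0 X0 sub0set cards0; split=> //.
      by apply/subsetP => i; rewrite /supp inE mxE eqxx.
    by move=> i; rewrite inE.
  have [IH1 IH2 IH3 IH4] := IH (fun i Hi => Hk i (ltnW Hi)).
  have nz : r k != 0 by apply: Hk.
  have [j [Hmax [Hlam HLS]]] := Hstep k nz.
  have Hsz : supp (x0 - xs k) \subset S1.
    apply/subsetP => i; rewrite /supp inE !mxE => Hi.
    case: (eqVneq (x0 i 0) 0) => [H0|H0].
      move: Hi; rewrite H0 sub0r oppr_eq0 => Hi.
      by apply: (subsetP IH1); apply: (subsetP IH3); rewrite /supp inE.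
    by apply: (subsetP H01); rewrite /supp inE.
  have Hr : r k = A *m (x0 - xs k) by rewrite /r mulmxBr.
  rewrite /r in Hmax; rewrite -/(r k) Hr in Hmax.
  rewrite Hr in nz.
  have [jS cpos] := key Herc Hsz nz Hmax.
  have jL : j \notin lam k.
    apply/negP => jL; move: cpos; rewrite /corr -Hr IH4 // mxE normr0 ltxx.
    by [].
  rewrite Hlam; split.
  - by rewrite subUset sub1set jS IH1.
  - by rewrite cardsU1 jL IH2.
  - by rewrite -Hlam; case: HLS.
  - by rewrite -Hlam; apply: normal_eq.
set N := #|S1|.
have ex : exists k, (k <= N)%N && (r k == 0).
  case: (boolP [exists i : 'I_N.+1, r i == 0]).
    by move=> /existsP [i Hi]; exists i; rewrite Hi -ltnS ltn_ord.
  rewrite negb_exists => /forallP Hall.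
  have [I1 I2 _ _] := inv N.+1 (fun i Hi => Hall (Ordinal Hi)).
  by have := subset_leq_card I1; rewrite I2 ltnn.
have ex' : exists k, r k == 0 by case: ex => k /andP [_ H]; exists k.
case: (ex_minnP ex') => k /eqP rk Hmin.
have Hlt : forall i, (i < k)%N -> r i != 0.
  by move=> i ik; apply/negP => /Hmin; rewrite leqNgt ik.
have [I1 _ I3 _] := inv k Hlt.
exists k; split => //.
- by case: ex => k' /andP [k'N /Hmin kk']; apply: leq_trans kk' k'N.
- apply/eqP; rewrite -subr_eq0; apply/eqP.
  apply: (uniq_sol (proj1 Herc)).
    apply/subsetP => i; rewrite /supp inE !mxE => Hi.
    case: (eqVneq (x0 i 0) 0) => [H0|H0].
      move: Hi; rewrite H0 subr0 => Hi.
      by apply: (subsetP I1); apply: (subsetP I3); rewrite /supp inE.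
    by apply: (subsetP H01); rewrite /supp inE.
  by rewrite mulmxBr -opprB; move: rk; rewrite /r => ->; rewrite oppr0.
Qed.
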